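(* Let $d\ge2$, $\kappa,l>0$, $V$, $\rho$ and $W(\phi;\nu)$ ($\nu\ge-1$) as in the context, and $c>0$. On the region $\rho\in(0,1)$ consider the Euclidean metric and scalar $$ds^2=\Big(\frac{3l}{d}\Big)^2\frac{1+\nu\rho+\sqrt{1+2\nu\rho+\rho^2}}{2\rho^2\sqrt{1-\rho^2}\,(1+2\nu\rho+\rho^2)}d\rho^2+c^2\Big(\frac{\sqrt{1-\rho^2}}{2\rho^2}\big(1+\nu\rho+\sqrt{1+2\nu\rho+\rho^2}\big)\Big)^{3/d}dx^idx^i,\qquad \phi=\frac32\sqrt{\frac{d-1}{d\kappa^2}}\tanh^{-1}\rho,$$ with $x\in\mathbb R^d$. Writing the metric as $dr^2+e^{2A(r)}dx^idx^i$ with $r$ the proper radial coordinate increasing as $\rho\to0^+$, this configuration satisfies the first order equations $\frac{dA}{dr}=-\frac{\kappa^2}{d-1}W(\phi;\nu)$, $\frac{d\phi}{dr}=\partial_\phi W(\phi;\nu)$, and hence solves the Euler–Lagrange equations of $S=\int d^{d+1}x\sqrt g\big(-\frac{1}{2\kappa^2}R+\frac12g^{\mu\nu}\partial_\mu\phi\partial_\nu\phi+V(\phi)\big)$. Moreover $c=\big(\frac23\sqrt{\frac{d\kappa^2}{d-1}}\phi_-\big)^{3/d}$, where $\phi\sim e^{-dr/3l}\phi_-$ as $r\to\infty$.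
   Context: $V(\phi)=-\frac{d(d-1)}{2\kappa^2l^2}\cosh\big(\frac23\sqrt{\frac{d\kappa^2}{d-1}}\phi\big)$, $\rho=\tanh\big(\frac23\sqrt{\frac{d\kappa^2}{d-1}}\phi\big)$, and $W(\phi;\nu)=-\frac{d-1}{\kappa^2l}(1-\rho^2)^{-3/4}\frac{1-\rho^2+\sqrt{1+2\nu\rho+\rho^2}}{\sqrt{2(1+\nu\rho+\sqrt{1+2\nu\rho+\rho^2})}}$, which is known to satisfy $V=\frac12(W'^2-\frac{d\kappa^2}{d-1}W^2)$. *)

(* Defs.v *)
From Stdlib Require Import Reals.
From Coquelicot Require Import Coquelicot.
Open Scope R_scope.

Definition kcoef (d : nat) (kappa : R) : R :=
  sqrt (INR d * kappa ^ 2 / (INR d - 1)).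

Definition atanh (x : R) : R := / 2 * ln ((1 + x) / (1 - x)).

Definition rho_of_phi (d : nat) (kappa phi : R) : R :=
  tanh (2 / 3 * kcoef d kappa * phi).

Definition Vpot (d : nat) (kappa l phi : R) : R :=
  - (INR d * (INR d - 1)) / (2 * kappa ^ 2 * l ^ 2)
    * cosh (2 / 3 * kcoef d kappa * phi).

Definition Sq (nu rho : R) : R := sqrt (1 + 2 * nu * rho + rho ^ 2).

Definition Wsup (d : nat) (kappa l nu phi : R) : R :=
  let rho := rho_of_phi d kappa phi in
  - (INR d - 1) / (kappa ^ 2 * l)
    * Rpower (1 - rho ^ 2) (- (3 / 4))
    * (1 - rho ^ 2 + Sq nu rho)
    / sqrt (2 * (1 + nu * rho + Sq nu rho)).

Definition g_rhorho (d : nat) (l nu rho : R) : R :=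
  (3 * l / INR d) ^ 2
  * (1 + nu * rho + Sq nu rho)
  / (2 * rho ^ 2 * sqrt (1 - rho ^ 2) * (1 + 2 * nu * rho + rho ^ 2)).

Definition g_xx (d : nat) (nu c rho : R) : R :=
  c ^ 2 * Rpower (sqrt (1 - rho ^ 2) / (2 * rho ^ 2) * (1 + nu * rho + Sq nu rho))
                 (3 / INR d).

Definition A_rho (d : nat) (nu c rho : R) : R := ln (g_xx d nu c rho) / 2.

Definition phi_rho (d : nat) (kappa rho : R) : R :=
  3 / 2 * sqrt ((INR d - 1) / (INR d * kappa ^ 2)) * atanh rho.

(* r is a proper radial coordinate on rho in (0,1), increasing as rho -> 0+ :
   dr = - sqrt(g_rhorho) drho *)
Definition radial_coord (d : nat) (l nu : R) (r : R -> R) : Prop :=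
  forall rho, 0 < rho < 1 -> is_derive r rho (- sqrt (g_rhorho d l nu rho)).

(* Fefferman-Graham normalisation of the additive constant in r:
   A(r) - r/l -> 0 as r -> +oo (i.e. as rho -> 0+) *)
Definition radial_normalized (d : nat) (l nu c : R) (r : R -> R) : Prop :=
  filterlim (fun rho => A_rho d nu c rho - r rho / l) (at_right 0) (locally 0).

(* Main.v *)
Require Import Defs.
From Stdlib Require Import Reals Nsatz Lra Ranalysis5.
From Coquelicot Require Import Coquelicot.
Open Scope R_scope.

Lemma frac_eq4 a b c e : b <> 0 -> e <> 0 -> a * e = c * b -> a / b = c / e.
Proof. intros. unfold Rdiv. apply (Rmult_eq_reg_r (b*e)); [|apply Rmult_integral_contrapositive; tauto].
replace (a * / b * (b * e)) with (a*e) by (field; auto).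
replace (c * / e * (b * e)) with (c*b) by (field; auto). auto. Qed.
Lemma frac_eq2 a b c : b <> 0 -> a = c * b -> a / b = c.
Proof. intros. subst. field. auto. Qed.
Lemma frac_eq3 a c e : e <> 0 -> a * e = c -> a = c / e.
Proof. intros. subst. field. auto. Qed.
Ltac cross := first [apply frac_eq4 | apply frac_eq2 | apply frac_eq3].

Lemma is_derive_eq (f : R -> R) (x l l' : R) : is_derive f x l -> l = l' -> is_derive f x l'.
Proof. intros; subst; auto. Qed.

Lemma is_derive_comp' (f g : R -> R) x df dg :
  is_derive f (g x) df -> is_derive g x dg -> is_derive (fun y => f (g y)) x (dg * df).
Proof. intros. apply (is_derive_comp f g x df dg); auto. Qed.

Definition qf (x : R) := exp (ln (1 - x ^ 2) / 4).
Definition Nf nu x := 1 + nu * x + Sq nu x.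
Definition Tf nu x := sqrt (2 * Nf nu x).

Lemma qf_pos x : 0 < qf x.
Proof. apply exp_pos. Qed.

Lemma qf4 x : -1 < x < 1 -> qf x * qf x * qf x * qf x = 1 - x ^ 2.
Proof. intros. unfold qf. rewrite <- !exp_plus.
replace (ln (1 - x ^ 2) / 4 + ln (1 - x ^ 2) / 4 + ln (1 - x ^ 2) / 4 + ln (1 - x ^ 2) / 4)
  with (ln (1 - x^2)) by field. apply exp_ln. nra. Qed.

Lemma Q_q x : -1 < x < 1 -> sqrt (1 - x ^ 2) = qf x * qf x.
Proof. intros. rewrite <- qf4 by auto.
replace (qf x * qf x * qf x * qf x) with ((qf x * qf x)^2) by ring.
apply sqrt_pow2. pose proof (qf_pos x). nra. Qed.

Lemma P_q x : Rpower (1 - x ^ 2) (- (3 / 4)) * (qf x * qf x * qf x) = 1.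
Proof. unfold Rpower, qf. rewrite <- !exp_plus.
replace (- (3 / 4) * ln (1 - x ^ 2) + (ln (1 - x ^ 2) / 4 + ln (1 - x ^ 2) / 4 + ln (1 - x ^ 2) / 4))
  with 0 by field. apply exp_0. Qed.

Lemma S2pos nu x : -1 <= nu -> 0 <= x < 1 -> 0 < 1 + 2 * nu * x + x ^ 2.
Proof. intros. nra. Qed.

Lemma Sq_pos nu x : -1 <= nu -> 0 <= x < 1 -> 0 < Sq nu x.
Proof. intros. unfold Sq. apply sqrt_lt_R0. apply S2pos; auto. Qed.

Lemma Sq_sq nu x : -1 <= nu -> 0 <= x < 1 -> Sq nu x * Sq nu x = 1 + 2 * nu * x + x ^ 2.
Proof. intros. unfold Sq. apply sqrt_sqrt. left. apply S2pos; auto. Qed.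

Lemma Nf_pos nu x : -1 <= nu -> 0 <= x < 1 -> 0 < Nf nu x.
Proof. intros. unfold Nf. pose proof (Sq_pos nu x H H0). nra. Qed.

Lemma Tf_pos nu x : -1 <= nu -> 0 <= x < 1 -> 0 < Tf nu x.
Proof. intros. unfold Tf. apply sqrt_lt_R0. pose proof (Nf_pos nu x H H0). lra. Qed.

Lemma Tf_sq nu x : -1 <= nu -> 0 <= x < 1 -> Tf nu x * Tf nu x = 2 * (1 + nu * x + Sq nu x).
Proof. intros. unfold Tf. apply sqrt_sqrt. pose proof (Nf_pos nu x H H0). unfold Nf in *. lra. Qed.

Lemma dR_ge2 d : (2 <= d)%nat -> 2 <= INR d.
Proof. intros. replace 2 with (INR 2) by (simpl; ring). apply le_INR; auto. Qed.

Lemma kc_pos d kappa : (2 <= d)%nat -> 0 < kappa -> 0 < kcoef d kappa.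
Proof. intros. pose proof (dR_ge2 d H). unfold kcoef. apply sqrt_lt_R0.
apply Rdiv_lt_0_compat; nra. Qed.

Lemma kc_sq d kappa : (2 <= d)%nat -> 0 < kappa ->
  kcoef d kappa * kcoef d kappa * (INR d - 1) = INR d * kappa ^ 2.
Proof. intros. pose proof (dR_ge2 d H). unfold kcoef. rewrite sqrt_sqrt.
field. lra. apply Rlt_le, Rdiv_lt_0_compat; nra. Qed.

Lemma sqrt_inv_kc d kappa : (2 <= d)%nat -> 0 < kappa ->
  sqrt ((INR d - 1) / (INR d * kappa ^ 2)) = / kcoef d kappa.
Proof. intros. pose proof (dR_ge2 d H). unfold kcoef. rewrite <- sqrt_inv. f_equal.
field. split; nra. Qed.

Lemma tanh_exp x : tanh x = (exp x * exp x - 1) / (exp x * exp x + 1).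
Proof. unfold tanh, sinh, cosh. rewrite exp_Ropp. pose proof (exp_pos x).
field. split; try lra. nra. Qed.

Lemma tanh_bnd x : -1 < tanh x < 1.
Proof. rewrite tanh_exp. pose proof (exp_pos x). assert (0 < exp x * exp x) by nra.
split; [apply Rlt_div_r| apply Rlt_div_l]; lra. Qed.

Lemma tanh_pos x : 0 < x -> 0 < tanh x.
Proof. intros. rewrite tanh_exp. assert (1 < exp x). { rewrite <- exp_0. apply exp_increasing; auto. }
apply Rdiv_lt_0_compat; nra. Qed.

Lemma tanh_deriv x : is_derive tanh x (1 - tanh x ^ 2).
Proof. unfold tanh, sinh, cosh. auto_derive.
- pose proof (exp_pos x); pose proof (exp_pos (-x)). lra.
- rewrite exp_Ropp. pose proof (exp_pos x). field. split; try lra. nra. Qed.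

Lemma cosh_tanh x : cosh x = / sqrt (1 - tanh x ^ 2).
Proof. assert (Hc : 0 < cosh x). { unfold cosh. pose proof (exp_pos x); pose proof (exp_pos (-x)); lra. }
replace (1 - tanh x ^ 2) with ((/ cosh x)^2).
- rewrite sqrt_pow2. field. lra. apply Rlt_le, Rinv_0_lt_compat; auto.
- unfold tanh, cosh, sinh in *. rewrite exp_Ropp in *. pose proof (exp_pos x). field. nra. Qed.

Lemma atanh_tanh x : -1 < x < 1 -> tanh (atanh x) = x.
Proof. intros. rewrite tanh_exp. unfold atanh. rewrite <- exp_plus.
replace (/ 2 * ln ((1 + x) / (1 - x)) + / 2 * ln ((1 + x) / (1 - x))) with (ln ((1 + x) / (1 - x))) by field.
rewrite exp_ln. field. lra. apply Rdiv_lt_0_compat; lra. Qed.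

Lemma atanh_deriv x : -1 < x < 1 -> is_derive atanh x (/ (1 - x ^ 2)).
Proof. intros. unfold atanh. auto_derive.
- repeat split; try lra. apply Rdiv_lt_0_compat; lra.
- field. repeat split; nra. Qed.

Lemma atanh_pos x : 0 < x < 1 -> 0 < atanh x.
Proof. intros. unfold atanh. apply Rmult_lt_0_compat. lra. rewrite <- ln_1. apply ln_increasing. lra.
apply Rlt_div_r; lra. Qed.

Lemma atanh_0 : atanh 0 = 0.
Proof. unfold atanh. replace ((1+0)/(1-0)) with 1 by field. rewrite ln_1. ring. Qed.

Section K.
Variables (d : nat) (kappa : R) (Hd : (2 <= d)%nat) (Hk : 0 < kappa).

Lemma phi_rho_eq x : phi_rho d kappa x = 3 / 2 * / kcoef d kappa * atanh x.
Proof. unfold phi_rho. rewrite sqrt_inv_kc; auto. Qed.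

Lemma rho_phi x : -1 < x < 1 -> rho_of_phi d kappa (phi_rho d kappa x) = x.
Proof. intros. unfold rho_of_phi. rewrite phi_rho_eq. pose proof (kc_pos d kappa Hd Hk).
replace (2 / 3 * kcoef d kappa * (3 / 2 * / kcoef d kappa * atanh x)) with (atanh x) by (field; lra).
apply atanh_tanh; auto. Qed.

Lemma phi_rho_pos x : 0 < x < 1 -> 0 < phi_rho d kappa x.
Proof. intros. rewrite phi_rho_eq. pose proof (kc_pos d kappa Hd Hk). pose proof (atanh_pos x H).
apply Rmult_lt_0_compat; auto. apply Rmult_lt_0_compat. lra. apply Rinv_0_lt_compat; auto. Qed.

Lemma phi_rho_deriv x : -1 < x < 1 ->
  is_derive (phi_rho d kappa) x (3 / 2 * / kcoef d kappa * / (1 - x ^ 2)).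
Proof. intros. apply (is_derive_ext (fun x => 3 / 2 * / kcoef d kappa * atanh x)).
intros; rewrite phi_rho_eq; auto.
apply is_derive_eq with (scal (3 / 2 * / kcoef d kappa) (/ (1 - x ^ 2))).
apply is_derive_scal. apply atanh_deriv; auto. reflexivity. Qed.
End K.


Definition wfun (d : nat) (kappa l nu rho : R) : R :=
  - (INR d - 1) / (kappa ^ 2 * l)
    * Rpower (1 - rho ^ 2) (- (3 / 4))
    * (1 - rho ^ 2 + Sq nu rho)
    / sqrt (2 * (1 + nu * rho + Sq nu rho)).

Lemma Wsup_w d kappa l nu phi : Wsup d kappa l nu phi = wfun d kappa l nu (rho_of_phi d kappa phi).
Proof. reflexivity. Qed.

Definition w1 (d : nat) (kappa l nu rho : R) : R :=
  - (INR d - 1) / (kappa ^ 2 * l) * (3 / 2 * rho * Sq nu rho / (qf rho ^ 7 * Tf nu rho)).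

Ltac atoms nu rho :=
  try replace (rho * (rho * 1)) with (rho ^ 2) by ring;
  try replace (1 + - rho ^ 2) with (1 - rho ^ 2) by ring;
  try fold (Sq nu rho);
  try replace (sqrt (2 * (1 + nu * rho + Sq nu rho))) with (Tf nu rho) by reflexivity;
  try replace (exp (- (3 / 4) * ln (1 - rho ^ 2))) with (Rpower (1 - rho^2) (-(3/4))) by reflexivity.

Ltac pos := repeat (apply Rmult_lt_0_compat || apply pow_lt || apply Rinv_0_lt_compat); try lra; auto.

Section W.
Variables (d : nat) (kappa l nu : R) (Hd : (2 <= d)%nat) (Hk : 0 < kappa) (Hl : 0 < l) (Hnu : -1 <= nu).

Definition ufun nu rho := Rpower (1 - rho ^ 2) (- (3 / 4)) * (1 - rho ^ 2 + Sq nu rho)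
    / sqrt (2 * (1 + nu * rho + Sq nu rho)).
Definition u1 nu rho := 3 / 2 * rho * Sq nu rho / (qf rho ^ 7 * Tf nu rho).

Lemma u_deriv rho : 0 < rho < 1 -> is_derive (ufun nu) rho (u1 nu rho).
Proof. intros Hr. assert (Hr' : 0 <= rho < 1) by lra.
pose proof (S2pos nu rho Hnu Hr'). pose proof (Sq_pos nu rho Hnu Hr').
pose proof (Nf_pos nu rho Hnu Hr'). pose proof (Tf_pos nu rho Hnu Hr'). unfold Nf, Tf in *.
unfold ufun, Rpower, Sq. auto_derive.
- atoms nu rho. repeat split; try nra. apply Rgt_not_eq; auto.
- atoms nu rho. unfold u1.
  pose proof (Sq_sq nu rho Hnu Hr'). pose proof (Tf_sq nu rho Hnu Hr'). 
  pose proof (qf4 rho ltac:(lra)). pose proof (P_q rho). pose proof (qf_pos rho).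
  pose proof (Tf_pos nu rho Hnu Hr').
  set (S := Sq nu rho) in *. set (T := Tf nu rho) in *. set (q := qf rho) in *.
  set (P := Rpower (1 - rho ^ 2) (- (3 / 4))) in *.
  assert (1 - rho^2 <> 0) by nra.
  clearbody S T q P.
  field_simplify; try (repeat split; nra).
  cross; [ | | clear - H3 H4 H5 H6; cbn [pow] in *; nsatz].
  + replace (-8 * rho ^ 2 * S * T ^ 3 + 8 * S * T ^ 3) with (8 * S * T ^ 3 * (1 - rho ^ 2)) by ring.
    apply Rgt_not_eq. pos. nra.
  + apply Rgt_not_eq. pos.
Qed.

Lemma w_u_eq t : wfun d kappa l nu t = - (INR d - 1) / (kappa ^ 2 * l) * ufun nu t.
Proof. unfold wfun, ufun, Rdiv. ring. Qed.

Lemma w_deriv rho : 0 < rho < 1 -> is_derive (wfun d kappa l nu) rho (w1 d kappa l nu rho).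
Proof. intros. apply (is_derive_ext (fun x => (- (INR d - 1) / (kappa ^ 2 * l)) * ufun nu x)).
- intros. symmetry. apply w_u_eq.
- apply is_derive_eq with (scal (- (INR d - 1) / (kappa ^ 2 * l)) (u1 nu rho)).
  apply is_derive_scal. apply u_deriv; auto. reflexivity.
Qed.

Lemma g_sqrt rho : 0 < rho < 1 ->
  sqrt (g_rhorho d l nu rho) = 3 * l * Tf nu rho / (2 * INR d * rho * qf rho * Sq nu rho).
Proof. intros Hr. assert (Hr' : 0 <= rho < 1) by lra.
pose proof (Sq_pos nu rho Hnu Hr'). pose proof (Tf_pos nu rho Hnu Hr').
pose proof (Sq_sq nu rho Hnu Hr'). pose proof (Tf_sq nu rho Hnu Hr').
pose proof (qf4 rho ltac:(lra)). pose proof (qf_pos rho). pose proof (dR_ge2 d Hd).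
unfold g_rhorho. rewrite Q_q by lra. rewrite <- H1.
set (S := Sq nu rho) in *. set (T := Tf nu rho) in *. set (q := qf rho) in *.
clearbody S T q.
rewrite <- (sqrt_pow2 (3 * l * T / (2 * INR d * rho * q * S))).
- f_equal. field_simplify; try (repeat split; nra).
  cross; [ | | clear - H1 H2; cbn [pow] in *; nsatz].
  + apply Rgt_not_eq. pos.
  + apply Rgt_not_eq. pos.
- apply Rlt_le. apply Rdiv_lt_0_compat; pos.
Qed.

Lemma g_pos rho : 0 < rho < 1 -> 0 < sqrt (g_rhorho d l nu rho).
Proof. intros Hr. assert (Hr' : 0 <= rho < 1) by lra. rewrite g_sqrt by auto.
pose proof (Sq_pos nu rho Hnu Hr'). pose proof (Tf_pos nu rho Hnu Hr').
pose proof (qf_pos rho). pose proof (dR_ge2 d Hd).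
apply Rdiv_lt_0_compat; pos. Qed.

Definition Aform c rho := ln c + 3 / (2 * INR d) * (ln (sqrt (1 - rho ^ 2)) + ln (Nf nu rho) - ln 2 - 2 * ln rho).
Definition Ader rho := -3 * (1 - rho ^ 2 + Sq nu rho) / (2 * INR d * rho * (1 - rho ^ 2) * Sq nu rho).

Lemma A_rho_eq c rho : 0 < c -> 0 < rho < 1 -> A_rho d nu c rho = Aform c rho.
Proof. intros Hc Hr. assert (Hr' : 0 <= rho < 1) by lra.
pose proof (Nf_pos nu rho Hnu Hr'). pose proof (dR_ge2 d Hd).
assert (0 < sqrt (1 - rho ^ 2)) by (apply sqrt_lt_R0; nra).
unfold A_rho, g_xx, Aform, Rpower. unfold Nf in *.
rewrite ln_mult, ln_exp, ln_pow, ln_mult, ln_div, ln_mult, ln_pow; auto; try nra.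
all: try (simpl INR; field; lra).
all: try (apply Rinv_0_lt_compat; nra).
all: try (apply Rmult_lt_0_compat; auto; apply Rdiv_lt_0_compat; nra).
all: try (apply pow_lt; auto). all: try apply exp_pos. all:try (apply Rdiv_lt_0_compat; nra). Qed.

Lemma Aform_deriv c rho : 0 < rho < 1 -> is_derive (Aform c) rho (Ader rho).
Proof. intros Hr. assert (Hr' : 0 <= rho < 1) by lra.
pose proof (S2pos nu rho Hnu Hr'). pose proof (Sq_pos nu rho Hnu Hr').
pose proof (Nf_pos nu rho Hnu Hr'). pose proof (dR_ge2 d Hd).
assert (0 < sqrt (1 - rho ^ 2)) by (apply sqrt_lt_R0; nra).
unfold Nf in *. unfold Aform, Nf, Sq. auto_derive.
- atoms nu rho. repeat split; try nra.
- atoms nu rho. unfold Ader. pose proof (Sq_sq nu rho Hnu Hr').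
  assert (Hq: sqrt (1 - rho^2) * sqrt (1 - rho^2) = 1 - rho^2) by (apply sqrt_sqrt; nra).
  set (S := Sq nu rho) in *. set (Q := sqrt (1 - rho ^ 2)) in *. clearbody S Q.
  field_simplify; try (repeat split; nra).
  cross; [ | | clear - H4 Hq; cbn [pow] in *; nsatz].
  + replace (4 * INR d * rho ^ 2 * Q ^ 2 * nu * S + 4 * INR d * rho * Q ^ 2 * S ^ 2 +
  4 * INR d * rho * Q ^ 2 * S) with (4 * INR d * rho * Q ^ 2 * S * (1 + nu * rho + S)) by ring.
    apply Rgt_not_eq. pos.
  + replace (-2 * INR d * rho ^ 3 * S + 2 * INR d * rho * S) with (2 * INR d * rho * S * (1 - rho^2)) by ring.
    apply Rgt_not_eq. pos. nra.
Qed.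
End W.


Section P.
Variables (d : nat) (kappa l nu : R) (Hd : (2 <= d)%nat) (Hk : 0 < kappa) (Hl : 0 < l) (Hnu : -1 <= nu).

Definition g1 rho := w1 d kappa l nu rho * (2 / 3 * kcoef d kappa * (1 - rho ^ 2)).
Definition W1 phi := g1 (rho_of_phi d kappa phi).

Lemma rho_bnd phi : 0 < phi -> 0 < rho_of_phi d kappa phi < 1.
Proof. intros. unfold rho_of_phi. pose proof (kc_pos d kappa Hd Hk). split.
apply tanh_pos. pos. apply tanh_bnd. Qed.

Lemma lin_deriv (a x : R) : is_derive (fun y => a * y) x a.
Proof. auto_derive; auto. ring. Qed.

Lemma W_deriv phi : 0 < phi -> is_derive (Wsup d kappa l nu) phi (W1 phi).
Proof. intros Hp. pose proof (rho_bnd phi Hp) as Hb.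
apply (is_derive_ext (fun y => wfun d kappa l nu (tanh (2 / 3 * kcoef d kappa * y)))).
- intros; reflexivity.
- eapply is_derive_eq. apply is_derive_comp'. apply w_deriv; auto.
  apply is_derive_comp'. apply tanh_deriv. apply lin_deriv.
  unfold W1, g1, rho_of_phi. ring. Qed.

Lemma g1_ex rho : 0 < rho < 1 -> ex_derive g1 rho.
Proof. intros Hr. assert (Hr' : 0 <= rho < 1) by lra.
pose proof (S2pos nu rho Hnu Hr'). pose proof (Sq_pos nu rho Hnu Hr').
pose proof (Nf_pos nu rho Hnu Hr'). pose proof (Tf_pos nu rho Hnu Hr').
pose proof (qf_pos rho).
unfold Nf, Tf, qf, Sq in *. unfold g1, w1, qf, Tf, Nf, Sq. auto_derive.
replace (rho * (rho * 1)) with (rho ^ 2) by ring.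
repeat split; try nra. all: try (apply Rgt_not_eq; pos). Qed.

Lemma W1_ex phi : 0 < phi -> ex_derive W1 phi.
Proof. intros Hp. unfold W1, rho_of_phi. apply (ex_derive_comp g1 (fun y => tanh (2 / 3 * kcoef d kappa * y))).
apply g1_ex. apply rho_bnd; auto.
apply (ex_derive_comp tanh (fun y => (2 / 3 * kcoef d kappa * y))).
eexists; apply tanh_deriv. eexists; apply lin_deriv. Qed.

Lemma V_id phi : 0 < phi ->
  Vpot d kappa l phi = / 2 * (W1 phi ^ 2 - kcoef d kappa ^ 2 * Wsup d kappa l nu phi ^ 2).
Proof. intros Hp. pose proof (rho_bnd phi Hp) as Hb.
unfold Vpot. rewrite cosh_tanh. rewrite Wsup_w. unfold W1, g1, w1, wfun.
fold (rho_of_phi d kappa phi). set (rho := rho_of_phi d kappa phi) in *.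
rewrite Q_q by lra.
assert (Hr' : 0 <= rho < 1) by lra.
pose proof (Sq_pos nu rho Hnu Hr'). pose proof (Tf_pos nu rho Hnu Hr').
pose proof (Sq_sq nu rho Hnu Hr'). pose proof (Tf_sq nu rho Hnu Hr').
pose proof (qf4 rho ltac:(lra)). pose proof (qf_pos rho). pose proof (dR_ge2 d Hd).
pose proof (P_q rho). pose proof (kc_pos d kappa Hd Hk). pose proof (kc_sq d kappa Hd Hk).
replace (sqrt (2 * (1 + nu * rho + Sq nu rho))) with (Tf nu rho) by reflexivity.
set (S := Sq nu rho) in *. set (T := Tf nu rho) in *. set (q := qf rho) in *.
set (P := Rpower (1 - rho ^ 2) (- (3 / 4))) in *. set (k := kcoef d kappa) in *.
clearbody S T q P k.
field_simplify; try (repeat split; nra).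
cross; [ | | clear - H1 H2 H3 H6 H8; cbn [pow] in *; nsatz].
all: apply Rgt_not_eq; pos.
Qed.
End P.


Lemma loc_pos x : 0 < x -> locally x (fun y => 0 < y).
Proof. intros. apply (open_gt 0). auto. Qed.

Lemma loc01 x : 0 < x < 1 -> locally x (fun y => 0 < y < 1).
Proof. intros. apply (open_and (fun y => 0 < y) (fun y => y < 1)). apply open_gt. apply open_lt. auto. Qed.

Section R.
Variables (r rho_of Dr : R -> R)
  (Hr : forall x, 0 < x < 1 -> is_derive r x (Dr x))
  (HD : forall x, 0 < x < 1 -> Dr x < 0)
  (Hinv : forall x, 0 < x < 1 -> rho_of (r x) = x).

Lemma r_decr x y : 0 < x -> x < y -> y < 1 -> r y < r x.
Proof. intros. assert (- r x < - r y).
{ apply (incr_function (fun z => - r z) (Finite 0) (Finite 1) (fun z => - Dr z)); simpl; auto.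
  - intros. apply (is_derive_opp r). apply Hr; lra.
  - intros. pose proof (HD x0 ltac:(lra)). lra. }
lra. Qed.

Lemma r_cont x : 0 < x < 1 -> continuity_pt r x.
Proof. intros. apply continuity_pt_filterlim. apply (ex_derive_continuous r).
exists (Dr x). apply Hr; auto. Qed.

Lemma r_ivt a b y : 0 < a -> a < b -> b < 1 -> r b <= y <= r a -> exists z, a <= z <= b /\ r z = y.
Proof. intros. destruct (Req_dec y (r a)). exists a; split; [lra| auto].
destruct (Req_dec y (r b)). exists b; split; [lra| auto].
destruct (IVT_interv (fun z => y - r z) a b) as [z [Hz1 Hz2]]; auto; try lra.
- intros. apply (continuity_pt_minus (fun _ => y) r). apply continuity_pt_const. intros u v; auto.
  apply r_cont. lra.
- exists z. split; auto. lra. Qed.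

Lemma img_loc x : 0 < x < 1 -> locally (r x) (fun s => exists z, 0 < z < 1 /\ r z = s).
Proof. intros Hx. set (lb := x / 2). set (ub := (1 + x) / 2).
assert (H1 : r ub < r x) by (apply r_decr; unfold ub; lra).
assert (H2 : r x < r lb) by (apply r_decr; unfold lb; lra).
assert (He : 0 < Rmin (r x - r ub) (r lb - r x)) by (apply Rmin_pos; lra).
exists (mkposreal _ He). intros s Hs. unfold ball in Hs; simpl in Hs. unfold AbsRing_ball in Hs.
unfold abs, minus, plus, opp in Hs; simpl in Hs.
apply Rabs_lt_between' in Hs. pose proof (Rmin_l (r x - r ub) (r lb - r x)). pose proof (Rmin_r (r x - r ub) (r lb - r x)).
destruct (r_ivt lb ub s) as [z [Hz1 Hz2]]; unfold lb, ub in *; try lra.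
exists z. split; auto. lra. Qed.

Lemma rho_of_deriv x : 0 < x < 1 -> is_derive rho_of (r x) (/ Dr x).
Proof. intros Hx. set (lb := x / 2). set (ub := (1 + x) / 2).
assert (Hlu : lb < ub) by (unfold lb, ub; lra).
assert (H1 : r ub < r x) by (apply r_decr; unfold ub; lra).
assert (H2 : r x < r lb) by (apply r_decr; unfold lb; lra).
assert (Henc : r ub < r x < r lb) by lra.
assert (Himg : forall y, r ub <= y -> y <= r lb -> exists z, lb <= z <= ub /\ r z = y).
{ intros. apply r_ivt; unfold lb, ub in *; try lra. }
assert (Heq : forall y, r ub <= y -> y <= r lb -> comp r rho_of y = id y).
{ intros. destruct (Himg y H H0) as [z [Hz Hz']]. unfold comp, id. subst y. rewrite Hinv; auto.
  unfold lb, ub in *; lra. }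
assert (Hwf : forall y, r ub <= y -> y <= r lb -> lb <= rho_of y <= ub).
{ intros. destruct (Himg y H H0) as [z [Hz Hz']]. subst y. rewrite Hinv; auto.
  unfold lb, ub in *; lra. }
assert (Hdecr : forall y z, lb <= y -> y < z -> z <= ub -> r z < r y).
{ intros. apply r_decr; unfold lb, ub in *; lra. }
assert (Prf : forall a, lb <= a <= ub -> derivable_pt r a).
{ intros. apply ex_derive_Reals_0. exists (Dr a). apply Hr. unfold lb, ub in *; lra. }
assert (Hlim : derivable_pt_lim r (rho_of (r x)) (Dr x)).
{ rewrite Hinv; auto. apply is_derive_Reals. apply Hr; auto. }
assert (Hneq : derive_pt r (rho_of (r x))
   (derivable_pt_recip_interv_prelim1_decr r rho_of lb ub (r x) Hlu Henc Hwf Prf) <> 0).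
{ rewrite (derive_pt_eq_0 _ _ (Dr x) _ Hlim). pose proof (HD x Hx). lra. }
pose proof (derive_pt_recip_interv_decr r rho_of lb ub (r x) Hlu Henc Hdecr Hwf Prf Heq Hneq) as E.
rewrite (derive_pt_eq_0 _ _ (Dr x) _ Hlim) in E.
apply is_derive_Reals. eapply derive_pt_eq_1. rewrite E. pose proof (HD x Hx). field. lra. Qed.

Lemma comp_deriv (h : R -> R) h1 x : 0 < x < 1 -> is_derive h x h1 ->
  is_derive (fun s => h (rho_of s)) (r x) (h1 / Dr x).
Proof. intros. eapply is_derive_eq. apply is_derive_comp'. rewrite Hinv; eauto.
apply rho_of_deriv; auto. unfold Rdiv. ring. Qed.
End R.


Section Q.
Variables (d : nat) (kappa l nu c : R) (Hd : (2 <= d)%nat) (Hk : 0 < kappa) (Hl : 0 < l) (Hnu : -1 <= nu) (Hc : 0 < c).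

Lemma V_deriv phi : 0 < phi ->
  is_derive (Vpot d kappa l) phi (W1 d kappa l nu phi * Derive (W1 d kappa l nu) phi
     - kcoef d kappa ^ 2 * Wsup d kappa l nu phi * W1 d kappa l nu phi).
Proof. intros Hp.
apply (is_derive_ext_loc (fun y => / 2 * (W1 d kappa l nu y ^ 2 - kcoef d kappa ^ 2 * Wsup d kappa l nu y ^ 2))).
- apply (filter_imp (fun y => 0 < y)). intros. symmetry. apply V_id; auto. apply loc_pos; auto.
- assert (HW : is_derive (Wsup d kappa l nu) phi (W1 d kappa l nu phi)) by (apply W_deriv; auto).
  assert (HW1 : ex_derive (W1 d kappa l nu) phi) by (apply W1_ex; auto).
  auto_derive.
  + split; auto. split; auto. exists (W1 d kappa l nu phi); auto.
  + replace (Derive (fun x : R => Wsup d kappa l nu x) phi) with (W1 d kappa l nu phi)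
      by (symmetry; apply is_derive_unique; auto). change (fun x : R => W1 d kappa l nu x) with (W1 d kappa l nu). first [field | nsatz]. Qed.

Definition Dr rho := - sqrt (g_rhorho d l nu rho).

Lemma phi_bps rho : 0 < rho < 1 ->
  3 / 2 * / kcoef d kappa * / (1 - rho ^ 2) / Dr rho = W1 d kappa l nu (phi_rho d kappa rho).
Proof. intros Hr. unfold W1. rewrite rho_phi; auto; try lra. unfold g1, w1, Dr. rewrite g_sqrt; auto.
assert (Hr' : 0 <= rho < 1) by lra.
pose proof (Sq_pos nu rho Hnu Hr'). pose proof (Tf_pos nu rho Hnu Hr').
pose proof (qf4 rho ltac:(lra)). pose proof (qf_pos rho). pose proof (dR_ge2 d Hd).
pose proof (kc_pos d kappa Hd Hk). pose proof (kc_sq d kappa Hd Hk).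
set (S := Sq nu rho) in *. set (T := Tf nu rho) in *. set (q := qf rho) in *.
set (k := kcoef d kappa) in *. clearbody S T q k.
assert (1 - rho^2 <> 0) by nra.
field_simplify; try (repeat split; try apply Rgt_not_eq; pos).
cross; [ | | clear - H1 H5; cbn [pow] in *; nsatz].
- replace (3 * k * rho ^ 2 * l * T - 3 * k * l * T) with (- (3 * k * l * T * (1 - rho ^ 2))) by ring.
  apply Ropp_neq_0_compat. apply Rgt_not_eq. pos. nra.
- apply Rgt_not_eq. pos.
- nra.
Qed.

Lemma A_bps rho : 0 < rho < 1 ->
  Ader d nu rho / Dr rho = - kappa ^ 2 / (INR d - 1) * Wsup d kappa l nu (phi_rho d kappa rho).
Proof. intros Hr. rewrite Wsup_w. rewrite rho_phi; auto; try lra. unfold Ader, wfun, Dr. rewrite g_sqrt; auto.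
assert (Hr' : 0 <= rho < 1) by lra.
pose proof (Sq_pos nu rho Hnu Hr'). pose proof (Tf_pos nu rho Hnu Hr').
pose proof (qf4 rho ltac:(lra)). pose proof (qf_pos rho). pose proof (dR_ge2 d Hd).
pose proof (P_q rho).
replace (sqrt (2 * (1 + nu * rho + Sq nu rho))) with (Tf nu rho) by reflexivity.
set (S := Sq nu rho) in *. set (T := Tf nu rho) in *. set (q := qf rho) in *.
set (P := Rpower (1 - rho ^ 2) (- (3 / 4))) in *. clearbody S T q P.
assert (1 - rho^2 <> 0) by nra.
field_simplify; try (repeat split; try apply Rgt_not_eq; pos).
cross; [ | | clear - H1 H4; cbn [pow] in *; nsatz].
- replace (3 * rho ^ 2 * l * T - 3 * l * T) with (- (3 * l * T * (1 - rho ^ 2))) by ring.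
  apply Ropp_neq_0_compat. apply Rgt_not_eq. pos. nra.
- replace (INR d * l * T * kappa ^ 2 - l * T * kappa ^ 2) with (l * T * kappa ^ 2 * (INR d - 1)) by ring.
  apply Rgt_not_eq. pos.
- nra.
Qed.

Lemma A_rho_deriv rho : 0 < rho < 1 -> is_derive (A_rho d nu c) rho (Ader d nu rho).
Proof. intros. apply (is_derive_ext_loc (Aform d nu c)).
- apply (filter_imp (fun y => 0 < y < 1)). intros. symmetry. apply A_rho_eq; auto. apply loc01; auto.
- apply Aform_deriv; auto. Qed.

Lemma Dr_neg rho : 0 < rho < 1 -> Dr rho < 0.
Proof. intros. unfold Dr. pose proof (g_pos d l nu Hd Hl Hnu rho H). lra. Qed.

Section RR.
Variables (r rho_of : R -> R) (Hr : radial_coord d l nu r)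
  (Hinv : forall rho, 0 < rho < 1 -> rho_of (r rho) = rho).

Lemma Hr' : forall x, 0 < x < 1 -> is_derive r x (Dr x).
Proof. exact Hr. Qed.

Lemma bps_phi rho : 0 < rho < 1 ->
  is_derive (fun s => phi_rho d kappa (rho_of s)) (r rho) (W1 d kappa l nu (phi_rho d kappa rho)).
Proof. intros. rewrite <- phi_bps; auto. apply (comp_deriv r rho_of Dr Hr' Dr_neg Hinv); auto.
apply phi_rho_deriv; auto; lra. Qed.

Lemma bps_A rho : 0 < rho < 1 ->
  is_derive (fun s => A_rho d nu c (rho_of s)) (r rho) (- kappa ^ 2 / (INR d - 1) * Wsup d kappa l nu (phi_rho d kappa rho)).
Proof. intros. rewrite <- A_bps; auto. apply (comp_deriv r rho_of Dr Hr' Dr_neg Hinv); auto.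
apply A_rho_deriv; auto. Qed.

Lemma part2a :
     let A := fun s => A_rho d nu c (rho_of s) in
     let phi := fun s => phi_rho d kappa (rho_of s) in
     let W := Wsup d kappa l nu in
     let V := Vpot d kappa l in
     (forall rho, 0 < rho < 1 ->
        let s := r rho in
        is_derive A s (- kappa ^ 2 / (INR d - 1) * W (phi s)) /\
        ex_derive W (phi s) /\
        is_derive phi s (Derive W (phi s)) /\
        ex_derive (Derive phi) s /\ ex_derive (Derive A) s /\ ex_derive V (phi s) /\
        Derive (Derive phi) s + INR d * Derive A s * Derive phi s = Derive V (phi s) /\
        (INR d - 1) * Derive (Derive A) s = - kappa ^ 2 * (Derive phi s) ^ 2 /\
        INR d * (INR d - 1) / 2 * (Derive A s) ^ 2
          = kappa ^ 2 * (/ 2 * (Derive phi s) ^ 2 - V (phi s))).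
Proof. intros A phi W V rho Hrho s.
set (p0 := phi_rho d kappa rho).
assert (Hps : phi s = p0) by (unfold phi, s; rewrite Hinv; auto).
assert (Hp0 : 0 < p0) by (apply phi_rho_pos; auto).
assert (HW : is_derive W p0 (W1 d kappa l nu p0)) by (apply W_deriv; auto).
assert (HB1 : is_derive phi s (W1 d kappa l nu p0)) by (apply bps_phi; auto).
assert (HB2 : is_derive A s (- kappa ^ 2 / (INR d - 1) * W p0)) by (apply bps_A; auto).
assert (Himg : locally s (fun t => exists z, 0 < z < 1 /\ r z = t)) by (apply (img_loc r Dr Hr' Dr_neg); auto).
assert (Hlp : locally s (fun t => W1 d kappa l nu (phi t) = Derive phi t)).
{ eapply filter_imp; [| exact Himg]. intros t [z [Hz Hzt]]. subst t. symmetry.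
  apply is_derive_unique. unfold phi at 2. rewrite Hinv; auto. apply bps_phi; auto. }
assert (HlA : locally s (fun t => - kappa ^ 2 / (INR d - 1) * W (phi t) = Derive A t)).
{ eapply filter_imp; [| exact Himg]. intros t [z [Hz Hzt]]. subst t. symmetry.
  apply is_derive_unique. unfold phi. rewrite Hinv; auto. apply bps_A; auto. }
assert (HW1 : is_derive (W1 d kappa l nu) p0 (Derive (W1 d kappa l nu) p0)).
{ apply Derive_correct. apply W1_ex; auto. }
assert (Hd2phi : is_derive (Derive phi) s (W1 d kappa l nu p0 * Derive (W1 d kappa l nu) p0)).
{ apply (is_derive_ext_loc _ _ _ _ Hlp). apply is_derive_comp'. rewrite Hps; auto. auto. }
assert (Hd2A : is_derive (Derive A) s (W1 d kappa l nu p0 * (- kappa ^ 2 / (INR d - 1) * W1 d kappa l nu p0))).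
{ apply (is_derive_ext_loc _ _ _ _ HlA). 
  apply (is_derive_comp' (fun y => - kappa ^ 2 / (INR d - 1) * W y) phi). rewrite Hps.
  eapply is_derive_eq. apply is_derive_scal. apply HW. reflexivity. auto. }
assert (HV : is_derive V p0 (W1 d kappa l nu p0 * Derive (W1 d kappa l nu) p0
     - kcoef d kappa ^ 2 * W p0 * W1 d kappa l nu p0)) by (apply V_deriv; auto).
assert (Hk2 : kcoef d kappa ^ 2 = INR d * kappa ^ 2 / (INR d - 1)).
{ pose proof (kc_sq d kappa Hd Hk). pose proof (dR_ge2 d Hd). rewrite <- H. field. lra. }
pose proof (dR_ge2 d Hd).
rewrite Hps.
rewrite (is_derive_unique _ _ _ Hd2phi), (is_derive_unique _ _ _ Hd2A),
  (is_derive_unique _ _ _ HB2), (is_derive_unique _ _ _ HB1), (is_derive_unique _ _ _ HV),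
  (is_derive_unique _ _ _ HW).
split; [auto|]. split; [eexists; eauto|]. split; [auto|].
split; [eexists; eauto|]. split; [eexists; eauto|]. split; [eexists; eauto|].
split; [| split].
- rewrite Hk2. field. lra.
- field. lra.
- unfold V. rewrite (V_id d kappa l nu); auto. fold W. rewrite Hk2. field. lra.
Qed.
End RR.

End Q.


#[export] Instance af (x : R) : Filter (at_right x).
Proof. apply within_filter. apply locally_filter. Qed.

Lemma lim_mult {T} (F : (T -> Prop) -> Prop) {FF : Filter F} (f g : T -> R) a b :
  filterlim f F (locally a) -> filterlim g F (locally b) -> filterlim (fun x => f x * g x) F (locally (a * b)).
Proof. intros. apply (filterlim_comp_2 f g Rmult H H0). apply (filterlim_mult a b). Qed.

Lemma lim_plus {T} (F : (T -> Prop) -> Prop) {FF : Filter F} (f g : T -> R) a b :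
  filterlim f F (locally a) -> filterlim g F (locally b) -> filterlim (fun x => f x + g x) F (locally (a + b)).
Proof. intros. apply (filterlim_comp_2 f g Rplus H H0). apply (filterlim_plus a b). Qed.

Lemma lim_comp_cont {T} (F : (T -> Prop) -> Prop) (h g : R -> R) (f : T -> R) L :
  filterlim f F (locally L) -> continuous g L -> filterlim (fun x => g (f x)) F (locally (g L)).
Proof. intros. eapply filterlim_comp; eauto. Qed.

Lemma cont_at_right (g : R -> R) x : continuous g x -> filterlim g (at_right x) (locally (g x)).
Proof. intros. eapply filterlim_filter_le_1; [| exact H]. apply filter_le_within. Qed.

Lemma ball_R (y e z : R) : ball y e z <-> Rabs (z - y) < e.
Proof. unfold ball; simpl. unfold AbsRing_ball, abs, minus, plus, opp; simpl. tauto. Qed.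

Lemma lim_quot (f : R -> R) l : is_derive f 0 l -> f 0 = 0 ->
  filterlim (fun x => f x / x) (at_right 0) (locally l).
Proof. intros Hd H0. apply is_derive_Reals in Hd. apply filterlim_locally. intros eps.
destruct (Hd eps (cond_pos eps)) as [del Hdel].
exists del. intros y Hy Hy0. change R in y. apply ball_R. pose proof (proj1 (ball_R _ _ _) Hy) as Hy'.
assert (Hy2 : Rabs y < del) by (rewrite <- (Rminus_0_r y); exact Hy').
specialize (Hdel y ltac:(lra) Hy2). replace (0 + y) with y in Hdel by ring.
rewrite H0 in Hdel. replace ((f y - 0) / y) with (f y / y) in Hdel by (unfold Rdiv; ring). auto. Qed.

Lemma at_right_01 : at_right 0 (fun x => 0 < x < 1).
Proof. exists (mkposreal 1 Rlt_0_1). intros y Hy Hy0. pose proof (proj1 (ball_R _ _ _) Hy) as Hy'. simpl in Hy'.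
apply Rabs_lt_between' in Hy'. lra. Qed.

Lemma lim_eps (h : R -> R) : filterlim h (at_right 0) (locally 0) ->
  forall e, 0 < e -> exists del, 0 < del /\ forall y, 0 < y < del -> Rabs (h y) < e.
Proof. intros H e He. apply filterlim_locally with (eps := mkposreal e He) in H.
destruct H as [del Hdel]. exists del. split. apply cond_pos. intros y Hy.
assert (Hb : ball 0 del y) by (apply ball_R; rewrite Rabs_right; lra).
specialize (Hdel y Hb ltac:(lra)). pose proof (proj1 (ball_R _ _ _) Hdel) as Hd'. simpl in Hd'.
replace (h y - 0) with (h y) in Hd' by ring. auto. Qed.


Definition Gf nu x := ln (sqrt (1 - x ^ 2)) + ln (Nf nu x) - ln 2.

Lemma Sq0 nu : Sq nu 0 = 1.
Proof. unfold Sq. replace (1 + 2 * nu * 0 + 0 ^ 2) with 1 by ring. apply sqrt_1. Qed.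

Lemma Gf0 nu : Gf nu 0 = 0.
Proof. unfold Gf, Nf. rewrite Sq0. replace (1 - 0 ^ 2) with 1 by ring. rewrite sqrt_1, ln_1.
replace (1 + nu * 0 + 1) with 2 by ring. ring. Qed.

Lemma Gf_ex0 nu : ex_derive (Gf nu) 0.
Proof. unfold Gf, Nf, Sq. auto_derive. 
replace (1 + 2 * nu * 0 + 0 * (0 * 1)) with 1 by ring. rewrite sqrt_1.
replace (1 + - (0 * (0 * 1))) with 1 by ring. rewrite sqrt_1. repeat split; lra. Qed.

Lemma Gf_lim nu : filterlim (Gf nu) (at_right 0) (locally 0).
Proof. pose proof (cont_at_right (Gf nu) 0 (ex_derive_continuous _ _ (Gf_ex0 nu))) as H.
rewrite Gf0 in H. exact H. Qed.

Section S.
Variables (d : nat) (kappa l nu c : R) (Hd : (2 <= d)%nat) (Hk : 0 < kappa) (Hl : 0 < l) (Hnu : -1 <= nu) (Hc : 0 < c).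
Variables (r rho_of : R -> R) (Hr : radial_coord d l nu r)
  (Hinv : forall rho, 0 < rho < 1 -> rho_of (r rho) = rho)
  (Hn : radial_normalized d l nu c r).

Definition Df x := A_rho d nu c x - r x / l.

Lemma A_G x : 0 < x < 1 -> A_rho d nu c x = ln c + 3 / (2 * INR d) * (Gf nu x - 2 * ln x).
Proof. intros. rewrite A_rho_eq by auto. unfold Aform, Gf. ring. Qed.

Lemma r_form x : 0 < x < 1 -> r x = l * (ln c + 3 / (2 * INR d) * Gf nu x - 3 / INR d * ln x - Df x).
Proof. intros. unfold Df. rewrite A_G; auto. pose proof (dR_ge2 d Hd). field. lra. Qed.

Lemma r_big M eta : 0 < eta -> exists x, 0 < x < eta /\ x < 1 /\ M < r x.
Proof. intros He. pose proof (dR_ge2 d Hd).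
destruct (lim_eps (Gf nu) (Gf_lim nu) 1 Rlt_0_1) as [d1 [Hd1 H1]].
destruct (lim_eps Df Hn 1 Rlt_0_1) as [d2 [Hd2 H2]].
set (K := INR d / 3 * (Rabs (M / l - ln c) + 3 / (2 * INR d) + 1)).
set (x := Rmin (Rmin (Rmin eta d1) (Rmin d2 1) / 2) (exp (- K))).
assert (Hm : 0 < Rmin (Rmin eta d1) (Rmin d2 1)) by (repeat apply Rmin_pos; lra).
assert (Hx0 : 0 < x) by (apply Rmin_pos; [lra | apply exp_pos]).
assert (Hx1 : x <= Rmin (Rmin eta d1) (Rmin d2 1) / 2) by apply Rmin_l.
assert (Hx2 : x <= exp (- K)) by apply Rmin_r.
pose proof (Rmin_l (Rmin eta d1) (Rmin d2 1)). pose proof (Rmin_r (Rmin eta d1) (Rmin d2 1)).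
pose proof (Rmin_l eta d1). pose proof (Rmin_r eta d1). pose proof (Rmin_l d2 1). pose proof (Rmin_r d2 1).
assert (Hlx : ln x <= - K). { rewrite <- (ln_exp (- K)). apply ln_le; auto. }
exists x. split; [lra|]. split; [lra|].
rewrite r_form by lra.
specialize (H1 x ltac:(lra)). specialize (H2 x ltac:(lra)).
apply Rabs_def2 in H1. apply Rabs_def2 in H2.
pose proof (Rle_abs (M / l - ln c)).
assert (HM : M / l < ln c + 3 / (2 * INR d) * Gf nu x - 3 / INR d * ln x - Df x).
{ assert (3 / (2 * INR d) * Gf nu x > - (3 / (2 * INR d))).
  { assert (0 < 3 / (2 * INR d)) by (apply Rdiv_lt_0_compat; lra).
    assert (3 / (2 * INR d) * Gf nu x > 3 / (2 * INR d) * (-1)) by (apply Rmult_lt_compat_l; lra). lra. }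
  assert (- (3 / INR d) * ln x >= 3 / INR d * K).
  { assert (0 < 3 / INR d) by (apply Rdiv_lt_0_compat; lra). nra. }
  assert (3 / INR d * K = Rabs (M / l - ln c) + 3 / (2 * INR d) + 1) by (unfold K; field; lra).
  lra. }
apply (Rmult_lt_compat_l l) in HM; auto. replace (l * (M / l)) with M in HM by (field; lra). lra. Qed.

Lemma HR : forall x, 0 < x < 1 -> is_derive r x (Dr d l nu x).
Proof. exact Hr. Qed.
Lemma HD : forall x, 0 < x < 1 -> Dr d l nu x < 0.
Proof. intros; apply Dr_neg; auto. Qed.

Lemma img_small x0 : 0 < x0 < 1 -> forall s, r x0 < s -> exists z, 0 < z <= x0 /\ r z = s.
Proof. intros Hx s Hs. destruct (r_big s x0) as [x1 [Hx1 [_ Hx1']]]; try lra.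
destruct (r_ivt r (Dr d l nu) HR x1 x0 s) as [z [Hz Hz']]; try lra.
exists z. split; auto. lra. Qed.

Lemma rho_of_lim : filterlim rho_of (Rbar_locally p_infty) (at_right 0).
Proof. intros P [eps HP]. set (x0 := Rmin (eps / 2) (1 / 2)).
assert (0 < eps) by apply cond_pos.
assert (Hx0 : 0 < x0) by (apply Rmin_pos; lra).
pose proof (Rmin_l (eps / 2) (1 / 2)). pose proof (Rmin_r (eps / 2) (1 / 2)).
exists (r x0). intros s Hs. destruct (img_small x0 ltac:(unfold x0 in *; lra) s Hs) as [z [Hz Hzs]].
subst s. unfold filtermap. rewrite Hinv by (unfold x0 in *; lra). apply HP.
- apply ball_R. rewrite Rminus_0_r. rewrite Rabs_right; unfold x0 in *; lra.
- lra. Qed.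

Definition ff x := phi_rho d kappa x * exp (INR d * r x / (3 * l)).

Lemma ff_ev : Rbar_locally p_infty (fun s => ff (rho_of s) = phi_rho d kappa (rho_of s) * exp (INR d * s / (3 * l))).
Proof. exists (r (1 / 2)). intros s Hs. destruct (img_small (1/2) ltac:(lra) s Hs) as [z [Hz Hzs]].
subst s. unfold ff. rewrite Hinv by lra. auto. Qed.

Lemma ff_form x : 0 < x < 1 -> ff x = 3 / 2 * / kcoef d kappa * (atanh x / x) *
   (Rpower c (INR d / 3) * (exp (/ 2 * Gf nu x) * exp (- (INR d / 3) * Df x))).
Proof. intros Hx. unfold ff. rewrite phi_rho_eq; auto. rewrite (r_form x) by auto.
pose proof (dR_ge2 d Hd). pose proof (kc_pos d kappa Hd Hk).
replace (INR d * (l * (ln c + 3 / (2 * INR d) * Gf nu x - 3 / INR d * ln x - Df x)) / (3 * l))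
  with (INR d / 3 * ln c + / 2 * Gf nu x + - (INR d / 3) * Df x + - ln x) by (field; lra).
rewrite !exp_plus. rewrite exp_Ropp, exp_ln by lra. unfold Rpower.
replace (ln c * (INR d / 3)) with (INR d / 3 * ln c) by ring. field. lra. Qed.

Lemma ff_lim : filterlim ff (at_right 0) (locally (3 / 2 * / kcoef d kappa * Rpower c (INR d / 3))).
Proof.
eapply filterlim_ext_loc.
{ eapply filter_imp; [| exact at_right_01]. intros x Hx. symmetry. apply ff_form. exact Hx. }
assert (E : 3 / 2 * / kcoef d kappa * Rpower c (INR d / 3) =
  3 / 2 * / kcoef d kappa * 1 * (Rpower c (INR d / 3) * (exp (/ 2 * 0) * exp (- (INR d / 3) * 0)))).
{ replace (/ 2 * 0) with 0 by ring. replace (- (INR d / 3) * 0) with 0 by ring. rewrite exp_0. ring. }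
rewrite E.
apply (@lim_mult _ _ (af 0)).
- apply (@lim_mult _ _ (af 0)). apply filterlim_const.
  apply lim_quot. eapply is_derive_eq. apply atanh_deriv. lra. field_simplify; lra. apply atanh_0.
- apply (@lim_mult _ _ (af 0)). apply filterlim_const.
  apply (@lim_mult _ _ (af 0)).
  + apply (filterlim_comp _ _ _ (Gf nu) (fun y => exp (/ 2 * y)) _ (locally 0)). apply Gf_lim.
    apply (ex_derive_continuous (fun y => exp (/ 2 * y))). auto_derive. auto.
  + apply (filterlim_comp _ _ _ Df (fun y => exp (- (INR d / 3) * y)) _ (locally 0)). exact Hn.
    apply (ex_derive_continuous (fun y => exp (- (INR d / 3) * y))). auto_derive. auto.
Qed.

Lemma part2b : exists phim : R,
          filterlim (fun s => phi_rho d kappa (rho_of s) * exp (INR d * s / (3 * l)))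
                    (Rbar_locally p_infty) (locally phim) /\
          c = Rpower (2 / 3 * kcoef d kappa * phim) (3 / INR d).
Proof. exists (3 / 2 * / kcoef d kappa * Rpower c (INR d / 3)). split.
- eapply filterlim_ext_loc. apply ff_ev. eapply filterlim_comp. apply rho_of_lim. apply ff_lim.
- pose proof (dR_ge2 d Hd). pose proof (kc_pos d kappa Hd Hk).
  replace (2 / 3 * kcoef d kappa * (3 / 2 * / kcoef d kappa * Rpower c (INR d / 3))) with (Rpower c (INR d / 3))
   by (field; lra).
  rewrite Rpower_mult. replace (INR d / 3 * (3 / INR d)) with 1 by (field; lra). rewrite Rpower_1; auto.
Qed.
End S.


Section E.
Variables (d : nat) (kappa l nu c : R) (Hd : (2 <= d)%nat) (Hk : 0 < kappa) (Hl : 0 < l) (Hnu : -1 <= nu) (Hc : 0 < c).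

Definition dl := / (2 * (Rabs nu + 2)).
Definition Dom x := - dl < x < 1.

Lemma dl_pos : 0 < dl.
Proof. unfold dl. pose proof (Rabs_pos nu). apply Rinv_0_lt_compat. lra. Qed.

Lemma Dom_facts x : Dom x -> 0 < 1 - x ^ 2 /\ 0 < 1 + 2 * nu * x + x ^ 2 /\ 0 < 1 + nu * x.
Proof. intros [H1 H2]. pose proof (Rabs_pos nu). pose proof (Rle_abs nu). pose proof (Rle_abs (- nu)).
rewrite Rabs_Ropp in H3. assert (Hdl : dl * (2 * (Rabs nu + 2)) = 1) by (unfold dl; field; lra).
pose proof dl_pos.
assert (dl <= 1/4). { unfold dl. apply (Rmult_le_reg_r (2 * (Rabs nu + 2))). lra. rewrite Rinv_l; lra. }
destruct (Rle_lt_dec 0 x).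
- split. nra. split. nra. nra.
- assert (nu * x >= - (Rabs nu) * dl) by nra.
  assert (Rabs nu * dl < 1/2) by nra.
  split. nra. split; nra. Qed.

Lemma Dom_open x : Dom x -> locally x Dom.
Proof. intros. apply (open_and (fun y => - dl < y) (fun y => y < 1)). apply open_gt. apply open_lt. auto. Qed.

Definition Ef x := 4 * x * (1 + 2 * nu * x + x ^ 2) / (1 + sqrt (1 - x ^ 2)) - 6 * nu - 4 * x
   + 2 * (2 * nu + x) / (1 + Sq nu x).
Definition Kf x := Ef x / (2 * qf x * Sq nu x * (Tf nu x + 2 * qf x * Sq nu x)).

Lemma Dom_pos x : Dom x -> 0 < Sq nu x /\ 0 < Tf nu x /\ 0 < sqrt (1 - x ^ 2).
Proof. intros H. destruct (Dom_facts x H) as [H1 [H2 H3]].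
assert (0 < Sq nu x) by (apply sqrt_lt_R0; auto). split; auto. split.
apply sqrt_lt_R0. unfold Nf. lra. apply sqrt_lt_R0; auto. Qed.

Lemma Kf_ex x : Dom x -> ex_derive Kf x.
Proof. intros H. destruct (Dom_facts x H) as [H1 [H2 H3]]. destruct (Dom_pos x H) as [H4 [H5 H6]].
pose proof (qf_pos x). unfold Tf, Nf, Sq, qf in *.
unfold Kf, Ef, Tf, Nf, Sq, qf. auto_derive.
replace (x * (x * 1)) with (x ^ 2) by ring. try replace (1 + - x ^ 2) with (1 - x ^ 2) by ring.
repeat split; try lra. pose proof (exp_pos (ln (1 - x ^ 2) * / 4)). all: try (apply Rgt_not_eq; pos). all: try (apply Rplus_lt_0_compat; pos). Qed.

Lemma Kf_cont x : Dom x -> continuous Kf x.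
Proof. intros. apply (ex_derive_continuous Kf). apply Kf_ex; auto. Qed.

Definition Ii x := RInt Kf 0 x.

Lemma Ii_deriv x : Dom x -> is_derive Ii x (Kf x).
Proof. intros Hx. apply (is_derive_RInt Kf Ii 0 x).
- eapply filter_imp; [| apply Dom_open; exact Hx]. intros b Hb. unfold Ii. apply (RInt_correct Kf 0 b).
  apply ex_RInt_continuous. intros z Hz. apply Kf_cont.
  pose proof dl_pos. unfold Dom in *. pose proof (Rmin_l 0 b). pose proof (Rmin_r 0 b).
  pose proof (Rmax_l 0 b). pose proof (Rmax_r 0 b).
  destruct (Rle_lt_dec 0 b).
  + rewrite Rmin_left in Hz by lra. rewrite Rmax_right in Hz by lra. lra.
  + rewrite Rmin_right in Hz by lra. rewrite Rmax_left in Hz by lra. lra.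
- apply Kf_cont; auto. Qed.

Definition r0 x := l * ln c - 3 * l / INR d * (ln x + Ii x).

Lemma r0_deriv x : 0 < x < 1 -> is_derive r0 x (- sqrt (g_rhorho d l nu x)).
Proof. intros Hx. assert (HD : Dom x) by (pose proof dl_pos; unfold Dom; lra).
pose proof (Ii_deriv x HD) as HI.
unfold r0. auto_derive.
- split; [lra|]. split; auto. exists (Kf x); auto.
- change (fun x0 : R => Ii x0) with Ii. rewrite (is_derive_unique _ _ _ HI). rewrite g_sqrt; auto.
  assert (Hr' : 0 <= x < 1) by lra.
  pose proof (Sq_pos nu x Hnu Hr'). pose proof (Tf_pos nu x Hnu Hr').
  pose proof (Sq_sq nu x Hnu Hr'). pose proof (Tf_sq nu x Hnu Hr').
  pose proof (qf4 x ltac:(lra)). pose proof (qf_pos x). pose proof (dR_ge2 d Hd).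
  unfold Kf, Ef. rewrite Q_q by lra. fold (Nf nu x). unfold Tf in *.
  set (S := Sq nu x) in *. set (T := sqrt (2 * Nf nu x)) in *. set (q := qf x) in *.
  unfold Nf in *. clearbody S T q.
  field_simplify; try (repeat split; try apply Rgt_not_eq; pos).
  cross; [ | | clear - H1 H2 H3; cbn [pow] in *; nsatz].
  all: try (apply Rgt_not_eq; repeat apply Rplus_lt_0_compat; pos).
  all: nra.
Qed.

Lemma r0_norm : radial_normalized d l nu c r0.
Proof. unfold radial_normalized. pose proof (dR_ge2 d Hd).
apply (filterlim_ext_loc (fun x => 3 / (2 * INR d) * Gf nu x + 3 / INR d * Ii x)).
- eapply filter_imp; [| exact at_right_01]. intros x Hx.
  rewrite A_rho_eq by auto. unfold Aform, Gf, r0. field. split; lra.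
- replace (locally 0) with (locally (3 / (2 * INR d) * 0 + 3 / INR d * 0)) by (f_equal; ring).
  apply (@lim_plus _ _ (af 0)).
  + apply (@lim_mult _ _ (af 0)). apply filterlim_const. apply Gf_lim.
  + apply (@lim_mult _ _ (af 0)). apply filterlim_const.
    assert (H0 : Dom 0) by (pose proof dl_pos; unfold Dom; lra).
    pose proof (cont_at_right Ii 0 (ex_derive_continuous _ _ (ex_intro _ _ (Ii_deriv 0 H0)))) as HH.
    replace (Ii 0) with 0 in HH. exact HH. unfold Ii. rewrite RInt_point. reflexivity.
Qed.
End E.

Theorem mainTheorem6 (d : nat) (kappa l nu c : R)
  (Hd : (2 <= d)%nat) (Hkappa : 0 < kappa) (Hl : 0 < l) (Hnu : -1 <= nu) (Hc : 0 < c) :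
  (* a normalised proper radial coordinate exists *)
  (exists r : R -> R, radial_coord d l nu r /\ radial_normalized d l nu c r) /\
  (forall (r rho_of : R -> R),
     radial_coord d l nu r ->
     (forall rho, 0 < rho < 1 -> rho_of (r rho) = rho) ->
     let A := fun s => A_rho d nu c (rho_of s) in
     let phi := fun s => phi_rho d kappa (rho_of s) in
     let W := Wsup d kappa l nu in
     let V := Vpot d kappa l in
     (forall rho, 0 < rho < 1 ->
        let s := r rho in
        (* first-order (BPS) equations *)
        is_derive A s (- kappa ^ 2 / (INR d - 1) * W (phi s)) /\
        ex_derive W (phi s) /\
        is_derive phi s (Derive W (phi s)) /\
        (* Euler-Lagrange equations of S for the ansatz dr^2 + e^{2A(r)} dx^i dx^i *)
        ex_derive (Derive phi) s /\ ex_derive (Derive A) s /\ ex_derive V (phi s) /\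
        Derive (Derive phi) s + INR d * Derive A s * Derive phi s = Derive V (phi s) /\
        (INR d - 1) * Derive (Derive A) s = - kappa ^ 2 * (Derive phi s) ^ 2 /\
        INR d * (INR d - 1) / 2 * (Derive A s) ^ 2
          = kappa ^ 2 * (/ 2 * (Derive phi s) ^ 2 - V (phi s))) /\
     (* asymptotics and the value of c *)
     (radial_normalized d l nu c r ->
        exists phim : R,
          filterlim (fun s => phi s * exp (INR d * s / (3 * l)))
                    (Rbar_locally p_infty) (locally phim) /\
          c = Rpower (2 / 3 * kcoef d kappa * phim) (3 / INR d))).

Proof.
split.
- exists (r0 d l nu c). split.
  + intros x Hx. apply r0_deriv; auto.
  + apply r0_norm; auto.
- intros r rho_of Hr Hinv A phi W V. split.
  + eapply part2a; eauto.
  + intros Hn. eapply part2b; eauto.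
Qed.
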